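(* Let $V=[\alpha_1,\beta_1]\times\dots\times[\alpha_d,\beta_d]$ be an axis-parallel box in $\mathbb{R}^d$ and let $\mathcal{G}_1,\dots,\mathcal{G}_n$ be non-empty collections of axis-parallel boxes in $\mathbb{R}^d$ such that (i) for every $i\in[n]$, every $B\in\mathcal{G}_i$ and every $j\in[d]$, $\Pi_j(B)\cap\{\alpha_j,\beta_j\}\neq\emptyset$ (so $B$ contains at least one vertex of $V$), and (ii) every colorful $n$-tuple is hit by at least one diagonally opposite pair of vertices of $V$. Let $(V_1,\dots,V_r)$, with $r<n$, be a colorful $r$-tuple such that there are at most $2^k$, with $k<d$, distinct diagonally opposite pairs of vertices of $V$ each of which hits $(V_1,\dots,V_r)$. Then at least one of the following holds: Option 1: for every diagonally opposite pair $(\lambda,\lambda')$ of vertices of $V$ hitting $(V_1,\dots,V_r)$ and every family $\mathcal{G}_i$ with $V_k\notin\mathcal{G}_i$ for all $k\in[r]$, the family $\mathcal{G}_i$ is hit by $\{\lambda,\lambda'\}$; Option 2: there exist $i\in[n]$ and $V_{r+1}\in\mathcal{G}_i$ such that $(V_1,\dots,V_r,V_{r+1})$ is a colorful tuple and there are at most $2^{k-1}$ distinct diagonally opposite pairs of vertices of $V$ each of which hits $(V_1,\dots,V_r,V_{r+1})$.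
   Context: For a box $B=[\alpha_1,\beta_1]\times\dots\times[\alpha_d,\beta_d]$, $\Pi_j(B)=[\alpha_j,\beta_j]$. A vertex of $V$ is a point $(\lambda_1,\dots,\lambda_d)$ with $\lambda_j\in\{\alpha_j,\beta_j\}$ for all $j$; vertices $\lambda,\lambda'$ are diagonally opposite if $\{\lambda_j,\lambda'_j\}=\{\alpha_j,\beta_j\}$ for all $j$. A set of points hits a tuple or family of boxes if every box contains at least one of the points. Given families $\mathcal{G}_1,\dots,\mathcal{G}_n$, a colorful $t$-tuple is $(C_1,\dots,C_t)$ with $C_j\in\mathcal{G}_{i_j}$ for pairwise distinct indices $i_1,\dots,i_t\in[n]$. *)

(* Defs.v *)
From HB Require Import structures.
From mathcomp Require Import all_boot all_order all_algebra.
From mathcomp Require Import finmap.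
Set Implicit Arguments. Unset Strict Implicit. Unset Printing Implicit Defensive.
Import Order.TTheory GRing.Theory Num.Theory.
Local Open Scope ring_scope.
Local Open Scope fset_scope.

(* A (closed) axis-parallel box in R^d: coordinate j gives [fst, snd]. *)
Definition box (R : realFieldType) (d : nat) := 'I_d -> R * R.

Definition point (R : realFieldType) (d : nat) := {ffun 'I_d -> R}.

Definition in_box (R : realFieldType) (d : nat) (x : point R d) (B : box R d) : bool :=
  [forall j, ((B j).1 <= x j) && (x j <= (B j).2)].

(* Vertices of V = prod [a j, b j], indexed by sign vectors s. *)
Definition vertex (R : realFieldType) (d : nat) (a b : 'I_d -> R)
  (s : {ffun 'I_d -> bool}) : point R d := [ffun j => if s j then b j else a j].

Definition opp_sign (d : nat) (s : {ffun 'I_d -> bool}) : {ffun 'I_d -> bool} :=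
  [ffun j => ~~ s j].

Definition diag_pair (R : realFieldType) (d : nat) (a b : 'I_d -> R)
  (s : {ffun 'I_d -> bool}) : {fset point R d} :=
  [fset vertex a b s; vertex a b (opp_sign s)].

Definition pair_hits (R : realFieldType) (d t : nat) (a b : 'I_d -> R)
  (s : {ffun 'I_d -> bool}) (C : 'I_t -> box R d) : bool :=
  [forall i, in_box (vertex a b s) (C i) || in_box (vertex a b (opp_sign s)) (C i)].

Definition n_hitting_pairs (R : realFieldType) (d t : nat) (a b : 'I_d -> R)
  (C : 'I_t -> box R d) : nat :=
  size (undup [seq diag_pair a b s | s <- enum {: {ffun 'I_d -> bool}} & pair_hits a b s C]).

Definition colorful (R : realFieldType) (d n t : nat) (G : 'I_n -> box R d -> Prop)
  (C : 'I_t -> box R d) : Prop :=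
  exists f : 'I_t -> 'I_n, injective f /\ forall j, G (f j) (C j).

Definition ext_tuple (R : realFieldType) (d r : nat) (C : 'I_r -> box R d) (B : box R d)
  : 'I_r.+1 -> box R d :=
  fun j => match unlift ord_max j with Some j' => C j' | None => B end.

(* Main.v *)
Require Import Defs.
From HB Require Import structures.
From mathcomp Require Import all_boot all_order all_algebra.
From mathcomp Require Import finmap.
From Stdlib Require Import Classical.
Import Order.TTheory GRing.Theory Num.Theory.
Set Implicit Arguments. Unset Strict Implicit.

Definition xor3 d (u v w : {ffun 'I_d -> bool}) : {ffun 'I_d -> bool} :=
  [ffun j => addb (addb (u j) (v j)) (w j)].
Definition flip d (e : bool) (s : {ffun 'I_d -> bool}) := if e then opp_sign s else s.

Section H.
Variables (R : realFieldType) (d : nat) (a b : 'I_d -> R).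

Definition hitb (C : box R d) s :=
  in_box (vertex a b s) C || in_box (vertex a b (opp_sign s)) C.

Lemma in_box_xor3 C u1 u2 u3 : in_box (vertex a b u1) C -> in_box (vertex a b u2) C ->
  in_box (vertex a b u3) C -> in_box (vertex a b (xor3 u1 u2 u3)) C.
Proof.
move=> /forallP H1 /forallP H2 /forallP H3; apply/forallP => j.
move: (H1 j) (H2 j) (H3 j); rewrite /vertex /xor3 !ffunE.
by case: (u1 j); case: (u2 j); case: (u3 j).
Qed.

Lemma xor3_flip e1 e2 e3 (u1 u2 u3 : {ffun 'I_d -> bool}) :
  xor3 (flip e1 u1) (flip e2 u2) (flip e3 u3) = flip (addb (addb e1 e2) e3) (xor3 u1 u2 u3).
Proof.
apply/ffunP => j; rewrite /flip /xor3 /opp_sign.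
case: e1; case: e2; case: e3 => /=; rewrite !ffunE;
by case: (u1 j); case: (u2 j); case: (u3 j).
Qed.

Lemma hitb_flip C s : hitb C s -> exists e, in_box (vertex a b (flip e s)) C.
Proof. by case/orP => h; [exists false | exists true]. Qed.

Lemma flip_hitb C s e : in_box (vertex a b (flip e s)) C -> hitb C s.
Proof. by case: e => h; rewrite /hitb h ?orbT. Qed.

Lemma hitb_xor3 C s1 s2 s3 : hitb C s1 -> hitb C s2 -> hitb C s3 -> hitb C (xor3 s1 s2 s3).
Proof.
move=> /hitb_flip[e1 h1] /hitb_flip[e2 h2] /hitb_flip[e3 h3].
have := in_box_xor3 h1 h2 h3; rewrite xor3_flip; exact: flip_hitb.
Qed.

Lemma pair_hits_xor3 t (C : 'I_t -> box R d) s1 s2 s3 :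
  pair_hits a b s1 C -> pair_hits a b s2 C -> pair_hits a b s3 C ->
  pair_hits a b (xor3 s1 s2 s3) C.
Proof.
move=> /forallP H1 /forallP H2 /forallP H3; apply/forallP => i.
exact: (hitb_xor3 (H1 i) (H2 i) (H3 i)).
Qed.

Lemma vertex_eqP u v : vertex a b u = vertex a b v <-> forall j, a j = b j \/ u j = v j.
Proof.
split.
  move/ffunP => H j; move: (H j); rewrite !ffunE.
  by case: (u j); case: (v j) => //= h; [right|left|left|right].
move=> H; apply/ffunP => j; rewrite !ffunE; case: (H j) => [->|-> //].
by case: (u j); case: (v j).
Qed.

Lemma diag_pair_eq s t : diag_pair a b s = diag_pair a b t ->
  (vertex a b s = vertex a b t /\ vertex a b (opp_sign s) = vertex a b (opp_sign t)) \/
  (vertex a b s = vertex a b (opp_sign t) /\ vertex a b (opp_sign s) = vertex a b t).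
Proof.
move=> E.
have hs : vertex a b s \in diag_pair a b t by rewrite -E in_fset2 eqxx.
have hos : vertex a b (opp_sign s) \in diag_pair a b t by rewrite -E in_fset2 eqxx orbT.
have ht : vertex a b t \in diag_pair a b s by rewrite E in_fset2 eqxx.
have hot : vertex a b (opp_sign t) \in diag_pair a b s by rewrite E in_fset2 eqxx orbT.
move: hs hos ht hot; rewrite !in_fset2.
move=> /orP[/eqP e1|/eqP e1] /orP[/eqP e2|/eqP e2] /orP[/eqP e3|/eqP e3] /orP[/eqP e4|/eqP e4];
first [by left; split; congruence | by right; split; congruence].
Qed.

Lemma pair_hits_compat t (C : 'I_t -> box R d) s s' :
  diag_pair a b s = diag_pair a b s' -> pair_hits a b s C = pair_hits a b s' C.
Proof.
case/diag_pair_eq => [[E1 E2]|[E1 E2]]; apply: eq_forallb => i; rewrite E1 E2 //.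
by rewrite orbC.
Qed.

Lemma pair_hits_ext r (Vt : 'I_r -> box R d) B s :
  pair_hits a b s (ext_tuple Vt B) = pair_hits a b s Vt && hitb B s.
Proof.
apply/idP/idP.
  move/forallP => H; apply/andP; split.
    apply/forallP => j; move: (H (lift ord_max j)); by rewrite /ext_tuple liftK.
  by move: (H ord_max); rewrite /ext_tuple unlift_none.
case/andP => /forallP H1 H2; apply/forallP => j; rewrite /ext_tuple.
by case: unliftP => [j' _|_].
Qed.

Lemma xor3_cancel (x t s : {ffun 'I_d -> bool}) : xor3 (xor3 x t s) x t = s.
Proof.
apply/ffunP => j; rewrite /xor3 !ffunE.
by case: (x j); case: (t j); case: (s j).
Qed.

Lemma diag_pair_xor3 x y t s :
  diag_pair a b (xor3 x t s) = diag_pair a b (xor3 y t s) -> diag_pair a b x = diag_pair a b y.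
Proof.
case/diag_pair_eq => [[E1 E2]|[E1 E2]]; move/vertex_eqP: E1 => E1; move/vertex_eqP: E2 => E2.
  rewrite /diag_pair.
  have -> : vertex a b x = vertex a b y.
    apply/vertex_eqP => j; move: (E1 j); rewrite /xor3 !ffunE.
    by case: (x j); case: (y j); case: (t j); case: (s j) => /=; case=> h; auto.
  have -> // : vertex a b (opp_sign x) = vertex a b (opp_sign y).
  apply/vertex_eqP => j; move: (E2 j); rewrite /xor3 /opp_sign !ffunE.
  by case: (x j); case: (y j); case: (t j); case: (s j) => /=; case=> h; auto.
have e1 : vertex a b x = vertex a b (opp_sign y).
  apply/vertex_eqP => j; move: (E1 j); rewrite /xor3 /opp_sign !ffunE.
  by case: (x j); case: (y j); case: (t j); case: (s j) => /=; case=> h; auto.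
have e2 : vertex a b (opp_sign x) = vertex a b y.
  apply/vertex_eqP => j; move: (E2 j); rewrite /xor3 /opp_sign !ffunE.
  by case: (x j); case: (y j); case: (t j); case: (s j) => /=; case=> h; auto.
by rewrite /diag_pair e1 e2 fsetUC.
Qed.

End H.

Lemma undup_map_le (T U V : eqType) (f : T -> U) (h : T -> V) (s : seq T) :
  {in s &, forall x y, h x = h y -> f x = f y} ->
  (size (undup (map f s)) <= size (undup (map h s)))%N.
Proof.
elim: s => [//|x s IH] H /=.
have H' : {in s &, forall x y, h x = h y -> f x = f y}.
  by move=> u v us vs; apply: H; rewrite inE ?us ?vs orbT.
have IH' := IH H'.
case: ifP => hf; case: ifP => hh /=; rewrite ?IH' //.
- exact: leqW.
- case/mapP: hh => y ys hy; move: hf; rewrite (H x y) ?inE ?eqxx ?ys ?orbT //.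
  by rewrite map_f.
Qed.

Lemma count_half (T U : eqType) (f : T -> U) (P P' : pred T) (phi : T -> T) (e : seq T) :
  (forall x, P' x -> P x) ->
  (forall x y, P x -> P y -> f x = f y -> P' x = P' y) ->
  (forall x, x \in e -> P' x -> (phi x \in e) && P (phi x) && ~~ P' (phi x)) ->
  (forall x y, P' x -> P' y -> f (phi x) = f (phi y) -> f x = f y) ->
  (2 * size (undup [seq f x | x <- e & P' x]) <= size (undup [seq f x | x <- e & P x]))%N.
Proof.
move=> h1 h2 h3 h4.
set I' := undup [seq f x | x <- e & P' x].
set K := undup [seq f x | x <- e & P x && ~~ P' x].
have s1 : (size I' <= size (undup [seq f (phi x) | x <- e & P' x]))%N.
  apply: undup_map_le => x y; rewrite !mem_filter => /andP[px _] /andP[py _].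
  exact: h4.
have s2 : (size (undup [seq f (phi x) | x <- e & P' x]) <= size K)%N.
  apply: uniq_leq_size; first exact: undup_uniq.
  move=> z; rewrite mem_undup => /mapP[x]; rewrite mem_filter => /andP[px xe] ->.
  rewrite mem_undup; apply: map_f; rewrite mem_filter.
  by case/andP: (h3 x xe px) => /andP[-> ->] ->.
have s3 : (size I' + size K <= size (undup [seq f x | x <- e & P x]))%N.
  rewrite -size_cat; apply: uniq_leq_size.
    rewrite cat_uniq !undup_uniq andbT /=; apply/hasPn => z.
    rewrite mem_undup => /mapP[x]; rewrite mem_filter => /andP[/andP[px npx] xe] ->.
    rewrite mem_undup; apply/negP => /mapP[y]; rewrite mem_filter => /andP[py ye] fxy.
    by move: npx; rewrite (h2 x y px (h1 y py) fxy) py.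
  move=> z; rewrite mem_cat !mem_undup => /orP[] /mapP[x]; rewrite mem_filter.
    by move=> /andP[px xe] ->; apply: map_f; rewrite mem_filter h1.
  by move=> /andP[/andP[px _] xe] ->; apply: map_f; rewrite mem_filter px.
rewrite mul2n -addnn; apply: leq_trans s3; rewrite leq_add2l.
exact: leq_trans s1 s2.
Qed.

Local Open Scope ring_scope.

Theorem lemma5 (R : realFieldType) (d n : nat) (a b : 'I_d -> R)
  (hab : forall j, a j <= b j)
  (G : 'I_n -> box R d -> Prop)
  (Gne : forall i, exists B, G i B)
  (Hi : forall i B, G i B -> forall j, ((B j).1 <= a j <= (B j).2) || ((B j).1 <= b j <= (B j).2))
  (Hii : forall C : 'I_n -> box R d, colorful G C ->
           exists s : {ffun 'I_d -> bool}, pair_hits a b s C)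
  (r : nat) (hr : (r < n)%N) (Vt : 'I_r -> box R d) (HV : colorful G Vt)
  (k : nat) (hk : (k < d)%N) (Hcount : (n_hitting_pairs a b Vt <= 2 ^ k)%N) :
  (forall s : {ffun 'I_d -> bool}, pair_hits a b s Vt ->
     forall i, (forall j, ~ G i (Vt j)) ->
       forall B, G i B -> in_box (vertex a b s) B || in_box (vertex a b (opp_sign s)) B)
  \/
  (exists i (B : box R d), G i B /\ colorful G (ext_tuple Vt B) /\
     (2 * n_hitting_pairs a b (ext_tuple Vt B) <= 2 ^ k)%N).
Proof.
case: (classic (exists s, pair_hits a b s Vt /\ exists i, (forall j, ~ G i (Vt j)) /\
   exists B, G i B /\ ~~ hitb a b B s)) => [[s0 [Hs0 [i [Hi' [B [GB nB]]]]]]|Hno]; last first.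
  left=> s Hs i Hij B GB; apply/negPn/negP => nh; apply: Hno.
  by exists s; split=> //; exists i; split=> //; exists B; split=> //; apply/negP.
right; exists i, B; split=> //; split.
  case: HV => f0 [inj0 Gf0].
  exists (fun j => match unlift ord_max j with Some j' => f0 j' | None => i end); split.
    move=> x y; case: (unliftP ord_max x) => [x' ->|->]; case: (unliftP ord_max y) => [y' ->|->];
      rewrite ?liftK ?unlift_none //.
    - by move/inj0 => ->.
    - by move=> e; case: (Hi' x'); rewrite -e.
    - by move=> e; case: (Hi' y'); rewrite e.
  by move=> j; rewrite /ext_tuple; case: (unlift ord_max j).
have [t0 Ht0|none] := pickP (fun t => pair_hits a b t (ext_tuple Vt B)); last first.
  rewrite /n_hitting_pairs (@eq_filter _ _ pred0) ?filter_pred0 //.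

apply: leq_trans Hcount; rewrite /n_hitting_pairs.
apply: (@count_half _ _ (diag_pair a b) (fun s => pair_hits a b s Vt)
   (fun s => pair_hits a b s (ext_tuple Vt B)) (fun x => xor3 x t0 s0)).
- by move=> x; rewrite pair_hits_ext => /andP[].
- by move=> x y _ _ /pair_hits_compat ->.
- move=> x _ Px; rewrite mem_enum /=.
  have Pt0 := Ht0; rewrite pair_hits_ext in Pt0; case/andP: Pt0 => Pt0 _.
  have Px' := Px; rewrite pair_hits_ext in Px'; case/andP: Px' => Px' _.
  rewrite (pair_hits_xor3 Px' Pt0 Hs0) /=; apply/negP => Pphi.
  have := pair_hits_xor3 Pphi Px Ht0; rewrite xor3_cancel pair_hits_ext => /andP[_ h].
  by move: nB; rewrite h.
- by move=> x y _ _ /diag_pair_xor3.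
Qed.
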